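(* Let $k\ge 2$ be an integer, and let $G$ be the graph obtained from two disjoint copies of the helm $H_4$ and a path $u_1u_2\cdots u_k$ (of length $k-1$) by identifying $u_1$ with the apex vertex of the first copy of $H_4$ and $u_k$ with the apex vertex of the second copy of $H_4$. Then $G$ admits a signed product cordial labeling.
   Context: A graph $G$ is signed product cordial if there is a vertex labeling $\alpha: V(G)\to\{1,-1\}$ such that, with the induced edge labeling $\alpha^*(uv)=\alpha(u)\alpha(v)$, we have $|v_\alpha(-1)-v_\alpha(1)|\le 1$ and $|e_{\alpha^*}(-1)-e_{\alpha^*}(1)|\le 1$. Here $v_\alpha(x)$ is the number of vertices labeled $x$ and $e_{\alpha^*}(x)$ is the number of edges labeled $x$; such an $\alpha$ is called a signed product cordial labeling. The wheel $W_n$ consists of a cycle $C_n$ (the rim) together with an apex vertex adjacent to every rim vertex. The helm $H_n$ ($n\ge 3$) is obtained from $W_n$ by attaching a pendant edge at each rim vertex. Thus $H_4$ has an apex $v_0$, rim vertices $v_1,\dots,v_4$ forming a $4$-cycle, each adjacent to $v_0$, and pendant vertices $v_1',\dots,v_4'$ with $v_i'$ adjacent only to $v_i$. *)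

(* Defs.v *)
From mathcomp Require Import all_boot all_order all_algebra.
Set Implicit Arguments. Unset Strict Implicit. Unset Printing Implicit Defensive.
Import GRing.Theory Num.Theory.
Local Open Scope ring_scope.

Definition simple_graph (T : finType) (e : rel T) : Prop :=
  symmetric e /\ irreflexive e.

Definition edges (T : finType) (e : rel T) : {set {set T}} :=
  [set [set x; y] | x in T, y in T & e x y].

Definition is_sign (z : int) : bool := (z == 1) || (z == -1).

Definition edge_label (T : finType) (alpha : T -> int) (E : {set T}) : int :=
  \prod_(x in E) alpha x.

Definition signed_product_cordial_labeling (T : finType) (e : rel T)
    (alpha : T -> int) : Prop :=
  (forall x, is_sign (alpha x)) /\
  `| (#|[set x | alpha x == -1]|%:Z) - (#|[set x | alpha x == 1]|%:Z) | <= 1 /\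
  `| (#|[set E in edges e | edge_label alpha E == -1]|%:Z)
     - (#|[set E in edges e | edge_label alpha E == 1]|%:Z) | <= 1.

Definition signed_product_cordial (T : finType) (e : rel T) : Prop :=
  exists alpha : T -> int, signed_product_cordial_labeling e alpha.

(* ---- The helm H_4 on 'I_9:  0 = apex v0, 1..4 = rim v1..v4 (cycle),
        5..8 = pendants v1'..v4' with v_i' adjacent to v_i. ---- *)
Definition helm4_adj (i j : nat) : bool :=
  ((i == 0%N) && (1 <= j)%N && (j <= 4)%N)
  || ((1 <= i)%N && (i <= 3)%N && (j == i.+1))
  || ((i == 4%N) && (j == 1%N))
  || ((1 <= i)%N && (i <= 4)%N && (j == i + 4)%N).

Definition helm4_rel (i j : 'I_9) : bool :=
  helm4_adj i j || helm4_adj j i.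

(* ---- The graph G of the theorem, for k >= 2.
   Vertices: inl (inl i) = vertex i of the first H_4,
             inl (inr i) = vertex i of the second H_4,
             inr m       = path vertex u_{m+2}  (m < k-2), i.e. u_2..u_{k-1}.
   u_1 is identified with the apex of copy 1, u_k with the apex of copy 2. ---- *)
Definition GV (k : nat) : finType := (('I_9 + 'I_9) + 'I_(k - 2))%type.

(* index of a vertex on the path u_1 ... u_k (1-based), or 0 if not on it *)
Definition path_pos (k : nat) (x : GV k) : nat :=
  match x with
  | inl (inl i) => if nat_of_ord i == 0%N then 1%N else 0%N
  | inl (inr i) => if nat_of_ord i == 0%N then k else 0%N
  | inr m => (nat_of_ord m + 2)%N
  end.

Definition G_rel (k : nat) (x y : GV k) : bool :=
  match x, y with
  | inl (inl i), inl (inl j) => helm4_rel i j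
  | inl (inr i), inl (inr j) => helm4_rel i j
  | _, _ => false
  end
  || [&& path_pos x != 0%N, path_pos y != 0%N &
         ((path_pos y == (path_pos x).+1) || (path_pos x == (path_pos y).+1))].

(* Main.v *)
Require Import Defs.
From mathcomp Require Import all_boot all_order all_algebra zify.
Import GRing.Theory Num.Theory.
Local Open Scope ring_scope.

Definition hl (n : nat) : int := match n with 1%N|2%N|5%N|7%N => 1 | _ => -1 end.
Definition ha (c : int) (i : 'I_9) : int := if nat_of_ord i == 0%N then c else hl i.

Lemma helm_zero c : is_sign c ->
  \sum_(i < 9) \sum_(j < 9) (if helm4_rel i j then ha c i * ha c j else 0) = 0.
Proof. by case/orP=> /eqP->; rewrite !big_ord_recr !big_ord0 /=; vm_compute. Qed.

Lemma card_sum (I : finType) (A : {set I}) (w : I -> int) :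
  (forall i, is_sign (w i)) ->
  #|[set i in A | w i == -1]|%:Z - #|[set i in A | w i == 1]|%:Z
    = - \sum_(i in A) w i.
Proof.
move=> sw.
have cnt : forall P : pred I, #|[set i in A | P i]|%:Z = \sum_(i in A) (P i)%:R.
  move=> P.
  rewrite (eq_bigr (fun i => if P i then 1 else 0)); last by move=> i _; case: (P i).
  rewrite -big_mkcondr.
  transitivity (\sum_(i in [set i in A | P i]) (1:int)).
    by rewrite sumr_const natz.
  by apply: eq_bigl => i; rewrite inE.
rewrite !cnt [in RHS](eq_bigr (fun i => (w i == 1)%:R - (w i == -1)%:R)).
  by rewrite sumrB opprB.
by move=> i _; case/orP: (sw i) => /eqP ->.
Qed.

Lemma dc (T : finType) (e : rel T) (w : T -> int) : symmetric e -> irreflexive e ->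
  \sum_x \sum_y (if e x y then w x * w y else 0)
    = 2 * \sum_(E in edges e) edge_label w E.
Proof.
move=> sy ir.
have neq : forall x y, e x y -> x != y.
  by move=> x y exy; apply/eqP=> xy; rewrite xy ir in exy.
have lab : forall x y, e x y -> edge_label w [set x; y] = w x * w y.
  move=> x y exy; rewrite /edge_label big_setU1 ?big_set1 //= inE; exact: neq.
rewrite pair_big /=.
set S := [set p : T * T | e p.1 p.2].
transitivity (\sum_(p in S) edge_label w [set p.1; p.2]).
  rewrite [RHS]big_mkcond /=; apply: eq_bigr => p _; rewrite inE.
  by case: ifP => // ep; rewrite lab.
rewrite (partition_big_imset (fun p : T*T => [set p.1; p.2])) /=.
have -> : [set [set p.1; p.2] | p in S] = edges e.
  apply/setP=> E; apply/imsetP/imset2P.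
  - case=> p; rewrite inE => ep ->; by econstructor; [|rewrite inE; exact ep|].
  - by case=> x y _; rewrite inE => exy ->; exists (x, y); rewrite ?inE.
rewrite big_distrr /=; apply: eq_bigr => E /imset2P [x y _]; rewrite inE => /andP[_ exy] ->.
rewrite (eq_bigr (fun _ => edge_label w [set x;y])); last by move=> p /andP[_ /eqP ->].
transitivity (\sum_(p in [set (x,y); (y,x)]) edge_label w [set x; y]); last first.
  rewrite sumr_const cards2.
  have -> : ((x, y) != (y, x)) by rewrite xpair_eqE negb_and neq.
  by rewrite mulr_natl.
apply: eq_bigl.
  case=> a b; rewrite !inE /=; apply/andP/orP.
  - case=> eab /eqP hs.
    have ha : a \in [set x; y] by rewrite -hs !inE eqxx.
    have hb : b \in [set x; y] by rewrite -hs !inE eqxx orbT.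
    move: eab ha hb; rewrite !inE => eab /orP[]/eqP ea /orP[]/eqP eb; subst.
    + by rewrite ir in eab.
    + by left.
    + by right.
    + by rewrite ir in eab.
  - case=> /eqP [-> ->]; split => //; first by rewrite sy.
    by rewrite setUC.
Qed.

Definition f (p : nat) : int := if odd p./2 then -1 else 1.

Lemma f_sign p : is_sign (f p).
Proof. by rewrite /f; case: ifP. Qed.

Lemma hl_sign n : is_sign (hl n).
Proof. by do 9 (case: n => [|n] //). Qed.

Lemma fprod p : f p * f p.+1 = if odd p then -1 else 1.
Proof.
rewrite /f /= uphalf_half; case: (odd p) => /=; case: (odd p./2) => //.
Qed.

Lemma sum_nat_eq1 (a b c : nat) (F : nat -> int) :
  \sum_(a <= p < b) (if p == c then F p else 0)
    = if (a <= c)%N && (c < b)%N then F c else 0.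
Proof.
elim: b => [|b IH]; first by rewrite big_geq // ltn0 andbF.
case: (leqP a b) => ab.
  rewrite big_nat_recr //= IH.
  case: (eqVneq b c) => [<-|bc] /=; first by rewrite ltnn andbF ab ltnSn /= add0r.
  by rewrite ltnS [(c <= b)%N]leq_eqVlt eq_sym (negbTE bc) /= addr0.
rewrite big_geq //; case: ifP => // /andP [ac cb]; lia.
Qed.

Lemma if_or (a b : bool) (v : int) : ~~ (a && b) ->
  (if a || b then v else 0) = (if a then v else 0) + (if b then v else 0).
Proof. by case: a; case: b => //= _; rewrite ?addr0 ?add0r. Qed.

Definition Tsum (n : nat) : int :=
  \sum_(1 <= q < n.+1) \sum_(1 <= p < n.+1)
     (if (q == p.+1) || (p == q.+1) then f p * f q else 0).

Lemma Tsum_val n : Tsum n.+1 = if odd n then -2 else 0.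
Proof.
elim: n => [|n IH].
  by rewrite /Tsum big_nat1 big_nat1.
move: IH; rewrite /Tsum => IH.
rewrite big_nat_recr //=.
rewrite (@eq_big_nat _ _ _ 1 n.+2 _ (fun q => \sum_(1 <= p < n.+2)
     (if (q == p.+1) || (p == q.+1) then f p * f q else 0)
   + (if q == n.+1 then f n.+2 * f q else 0))); last first.
  move=> q /andP [_ qn]; rewrite big_nat_recr //=; congr (_ + _).
  rewrite if_or; last by apply/negP => /andP [/eqP -> ]; lia.
  have -> : (q == n.+3) = false by lia.
  by rewrite eqSS [n.+1 == q]eq_sym add0r.
rewrite big_split /= IH sum_nat_eq1.
rewrite (@eq_big_nat _ _ _ 1 n.+3 _ (fun p => if p == n.+1 then f p * f n.+2 else 0)); last first.
  move=> p /andP [_ pn].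
  have -> : (p == n.+3) = false by lia.
  by rewrite eqSS eq_sym orbF.
rewrite sum_nat_eq1 /= (mulrC (f n.+2)) fprod /=.
by rewrite ltnSn leqnSn; case: (odd n).
Qed.

Lemma Vsum n : \sum_(1 <= p < n.+1) f p = if odd n then f n else 0.
Proof.
elim: n => [|n IH]; first by rewrite big_geq.
rewrite big_nat_recr //= IH.
case on: (odd n) => /=; last by rewrite add0r.
by rewrite /f /= uphalf_half on /=; case: (odd n./2); rewrite /= ?addrN ?addNr.
Qed.

Definition alpha {k : nat} (x : GV k) : int :=
  if path_pos x != 0%N then f (path_pos x)
  else match x with inl (inl i) => hl i | inl (inr i) => hl i | inr _ => 1 end.

Lemma alpha_sign k x : is_sign (@alpha k x).
Proof.
rewrite /alpha; case: ifP => _; first exact: f_sign.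
by case: x => [[i|i]|m]; rewrite ?hl_sign.
Qed.

Lemma sum9 (F : 'I_9 -> int) :
  (forall i : 'I_9, nat_of_ord i != 0%N -> F i = 0) -> \sum_(i < 9) F i = F ord0.
Proof. by move=> H; rewrite big_ord_recl big1 ?addr0 // => i _; apply: H. Qed.

Lemma pos_sum k (hk : (2 <= k)%N) (g : nat -> int) :
  \sum_(x : GV k) (if path_pos x == 0%N then 0 else g (path_pos x))
    = \sum_(1 <= p < k.+1) g p.
Proof.
rewrite !big_sumType /=.
rewrite (sum9 (fun i => if (if nat_of_ord i == 0%N then 1%N else 0%N) == 0%N then 0 else g (if nat_of_ord i == 0%N then 1%N else 0%N))); last first.
  by move=> i /negbTE ->.
rewrite (sum9 (fun i => if (if nat_of_ord i == 0%N then k else 0%N) == 0%N then 0 else g (if nat_of_ord i == 0%N then k else 0%N))); last first.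
  by move=> i /negbTE ->.
rewrite /= (_ : (k == 0%N) = false); last by lia.
rewrite (eq_bigr (fun i : 'I_(k-2) => g (i + 2)%N)); last by move=> i _; rewrite addn2.
rewrite -(big_mkord xpredT (fun i => g (i + 2)%N)) -(big_addn 0 k 2 xpredT g).
rewrite [RHS]big_ltn; last by lia.
rewrite (big_nat_recr k) /=; last by lia.
by rewrite addrA addrAC.
Qed.

Lemma alpha_pos k (x : GV k) : path_pos x != 0%N -> alpha x = f (path_pos x).
Proof. by rewrite /alpha => ->. Qed.

Lemma alpha1 k (i : 'I_9) : alpha (inl (inl i) : GV k) = ha 1 i.
Proof. by rewrite /alpha /ha /=; case: (nat_of_ord i == 0%N). Qed.

Lemma alpha2 k (hk : (2 <= k)%N) (i : 'I_9) : alpha (inl (inr i) : GV k) = ha (f k) i.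
Proof.
rewrite /alpha /ha /=; case: (nat_of_ord i == 0%N) => //.
by rewrite (_ : (k != 0%N) = true) //; lia.
Qed.

Lemma Vtot k (hk : (2 <= k)%N) : \sum_(x : GV k) alpha x = if odd k then f k else 0.
Proof.
rewrite (eq_bigr (fun x => (if path_pos x == 0%N then alpha x else 0)
   + (if path_pos x == 0%N then 0 else f (path_pos x)))); last first.
  by move=> x _; rewrite /alpha; case: eqP => _ /=; rewrite ?addr0 ?add0r.
rewrite big_split /= pos_sum // Vsum.
rewrite !big_sumType /= [\sum_(i < k - 2) _]big1 ?addr0; last by move=> m _; rewrite addn2.
rewrite /alpha !big_ord_recr !big_ord0 /=.
rewrite (_ : (k == 0%N) = false) /=; last by lia.
by rewrite add0r.
Qed.

Definition Hrel {k : nat} (x y : GV k) : bool :=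
  match x, y with
  | inl (inl i), inl (inl j) => helm4_rel i j
  | inl (inr i), inl (inr j) => helm4_rel i j
  | _, _ => false
  end.

Definition Prel {k : nat} (x y : GV k) : bool :=
  [&& path_pos x != 0%N, path_pos y != 0%N &
         ((path_pos y == (path_pos x).+1) || (path_pos x == (path_pos y).+1))].

Lemma G_relE k (x y : GV k) : G_rel x y = Hrel x y || Prel x y.
Proof. by []. Qed.

Lemma HP_disj k (x y : GV k) : ~~ (Hrel x y && Prel x y).
Proof.
rewrite /Hrel /Prel; case: x => [[i|i]|m]; case: y => [[j|j]|m'] //=;
  case: (nat_of_ord i == 0%N); case: (nat_of_ord j == 0%N); rewrite ?andbF //=;
  apply/negP => /and4P [] _ _ _; lia.
Qed.

Lemma Hzero k (hk : (2 <= k)%N) :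
  \sum_(x : GV k) \sum_(y : GV k) (if Hrel x y then alpha x * alpha y else 0) = 0.
Proof.
rewrite !big_sumType /=.
under eq_bigr do rewrite !big_sumType /=.
rewrite !big1_eq !addr0.
under eq_bigr => i _ do rewrite !addr0.
under eq_bigr => i _ do under eq_bigr => j _ do rewrite !alpha1.
rewrite helm_zero // add0r.
under eq_bigr => i _ do rewrite !big_sumType /= !big1_eq !addr0.
under eq_bigr => i _ do under eq_bigr => j _ do rewrite !alpha2 //.
under eq_bigr => i _ do rewrite add0r.
by rewrite helm_zero // f_sign.
Qed.

Lemma Ppart k (hk : (2 <= k)%N) :
  \sum_(x : GV k) \sum_(y : GV k) (if Prel x y then alpha x * alpha y else 0) = Tsum k.
Proof.
transitivity (\sum_(x : GV k) \sum_(1 <= q < k.+1)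
   (if (path_pos x != 0%N) && ((q == (path_pos x).+1) || (path_pos x == q.+1))
    then alpha x * f q else 0)).
  apply: eq_bigr => x _; rewrite -pos_sum //; apply: eq_bigr => y _.
  rewrite /Prel; case: (eqVneq (path_pos y) 0%N) => [->|py] /=; first by rewrite andbF.
  by rewrite (@alpha_pos _ _ py).
rewrite exchange_big /=.
apply: eq_bigr => q _; rewrite -pos_sum //; apply: eq_bigr => x _.
case: (eqVneq (path_pos x) 0%N) => [->|px] //=.
by rewrite alpha_pos.
Qed.

Lemma G_sym k : symmetric (@G_rel k).
Proof.
move=> x y; rewrite !G_relE; congr (_ || _).
  by case: x => [[i|i]|m]; case: y => [[j|j]|m'] //=; rewrite /helm4_rel orbC.
rewrite /Prel; case: (path_pos x != 0%N); case: (path_pos y != 0%N) => //=.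
by rewrite orbC.
Qed.

Lemma G_irr k : irreflexive (@G_rel k).
Proof.
move=> x; rewrite G_relE /Prel.
rewrite (_ : (path_pos x == (path_pos x).+1) = false); last by lia.
rewrite !andbF orbF.
by case: x => [[i|i]|m] //=; rewrite /helm4_rel /helm4_adj; lia.
Qed.

Theorem theorem2p4 (k : nat) (hk : (2 <= k)%N) :
  signed_product_cordial (@G_rel k).
Proof.
exists (@alpha k); split; first by move=> x; apply: alpha_sign.
have esign : forall E : {set GV k}, is_sign (edge_label alpha E).
  move=> E; rewrite /edge_label; apply: (big_ind is_sign) => //; last by move=> x _; apply: alpha_sign.
  by move=> a b /orP[]/eqP-> /orP[]/eqP->.
split.
  have -> : [set x | alpha x == -1] = [set x in [set: GV k] | alpha x == -1].
    by apply/setP => x; rewrite !inE.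
  have -> : [set x | alpha x == 1] = [set x in [set: GV k] | alpha x == 1].
    by apply/setP => x; rewrite !inE.
  rewrite card_sum; last by move=> x; apply: alpha_sign.
  rewrite normrN (eq_bigl xpredT); last by move=> x; rewrite inE.
  rewrite Vtot //; case: (odd k) => //.
  by case/orP: (f_sign k) => /eqP ->.
rewrite card_sum // normrN.
have key : 2 * \sum_(E in edges (@G_rel k)) edge_label alpha E = Tsum k.
  rewrite -dc; [|exact: G_sym|exact: G_irr].
  under eq_bigr => x _ do under eq_bigr => y _ do
    rewrite G_relE if_or ?HP_disj //.
  under eq_bigr => x _ do rewrite big_split /=.
  by rewrite big_split /= Hzero // add0r Ppart.
move: key; rewrite (_ : k = k.-1.+1); last by lia.
rewrite Tsum_val; case: (odd k.-1) => key.
  by rewrite (_ : \sum_(E in edges (@G_rel k.-1.+1)) edge_label alpha E = -1) //; lia.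
by rewrite (_ : \sum_(E in edges (@G_rel k.-1.+1)) edge_label alpha E = 0) //; lia.
Qed.
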